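(* Let $k\geq 4$. For every $0\leq \gamma< 1/2$, every $n$-node graph with maximum degree at most $\sqrt{n}$ that has at least $n^{k/2+\gamma}$ $k$-cycles must contain at least $\frac{1}{2}n^{k/2-1+\gamma}$ simple $\gamma$-dense $(k-2)$-paths.
   Context: In an $n$-node graph, a $(k-2)$-path is a path $u,u_1,\ldots,u_{k-4},w$ on $k-2$ nodes (counting both endpoints); it is simple if its nodes are distinct. A simple $(k-2)$-path is $\gamma$-dense if the number of $k$-cycles (simple cycles on $k$ vertices) that contain it as a subpath is at least $n^{1/2+\gamma}/2$. *)

(* Defs.v *)
From HB Require Import structures.
From mathcomp Require Import all_boot all_order all_algebra.
From mathcomp Require Import reals exp.
Set Implicit Arguments. Unset Strict Implicit. Unset Printing Implicit Defensive.
Import Order.TTheory GRing.Theory Num.Theory.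

Section Graphs.
Variables (T : finType) (e : rel T).

Definition simple_graph := symmetric e /\ irreflexive e.

Definition nbhd (v : T) : {set T} := [set u | e v u].

Definition cycle_seq (k : nat) (s : seq T) : bool :=
  [&& size s == k, uniq s & cycle e s].

Definition cedges (s : seq T) : {set {set T}} :=
  [set [set x.1; x.2] | x in zip s (rot 1 s)].

(* the k-cycles of the graph, as subgraphs (given by their edge sets) *)
Definition kcycles (k : nat) : {set {set {set T}}} :=
  [set C | [exists s : k.-tuple T, cycle_seq k s && (cedges s == C)]].

Definition simple_path (p : seq T) : bool :=
  uniq p && (if p is x :: q then path e x q else true).

Definition cycles_through (k : nat) (p : seq T) : {set {set {set T}}} :=
  [set C | [exists s : k.-tuple T,
     [&& cycle_seq k s, cedges s == C & take (k - 2) s == p]]].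

Definition gamma_dense (R : realType) (gamma : R) (k : nat) (p : seq T) : bool :=
  simple_path p &&
  ((#|T|%:R `^ (2^-1 + gamma)) / 2 <= (#|cycles_through k p|%:R : R))%R.

End Graphs.

(* Main.v *)
Require Import Defs.
From HB Require Import structures.
From mathcomp Require Import all_boot all_order all_algebra.
From mathcomp Require Import reals exp.
From mathcomp Require Import zify ring lra.
Import Order.TTheory GRing.Theory Num.Theory.
Set Implicit Arguments. Unset Strict Implicit. Unset Printing Implicit Defensive.
Local Open Scope ring_scope.

Lemma card_bigcup_le (I T : finType) (P : pred I) (A : I -> {set T}) :
  (#|\bigcup_(i | P i) A i| <= \sum_(i | P i) #|A i|)%N.
Proof.
elim/big_rec2: _ => [|i m X _ H]; first by rewrite cards0.
apply: leq_trans (leq_card_setU _ _).1 _.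
by rewrite leq_add2l.
Qed.

Definition walkb (T : Type) (e : rel T) (s : seq T) :=
  if s is x :: q then path e x q else true.

Section W.
Variables (R : realType) (T : finType) (e : rel T).
Hypothesis deg : forall v : T, (#|nbhd e v|%:R : R) <= Num.sqrt (#|T|%:R).

Lemma walk_head m (v : T) :
  (#|[set t : m.+1.-tuple T | (thead t == v) && walkb e t]|%:R : R)
    <= Num.sqrt (#|T|%:R) ^+ m.
Proof.
elim: m v => [|m IH] v.
  rewrite expr0 lern1.
  apply: leq_trans (_ : #|[set [tuple v]]| <= 1)%N; last by rewrite cards1.
  apply: subset_leq_card; apply/subsetP => t; rewrite !inE => /andP[/eqP <- _].
  apply/eqP/val_inj; case: t => [[|x [|y s]] //].
set sn := Num.sqrt _.
have teta (n : nat) (t : n.+1.-tuple T) : val t = thead t :: behead t.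
  by rewrite {1}[t]tuple_eta.
have H1 : (#|[set t : m.+2.-tuple T | (thead t == v) && walkb e t]|
   <= #|[set t' : m.+1.-tuple T | e v (thead t') && walkb e t']|)%N.
  rewrite -(card_in_imset (f := @behead_tuple _ _)); last first.
    move=> t1 t2; rewrite !inE => /andP[/eqP h1 _] /andP[/eqP h2 _] hb.
    move: hb => /(congr1 val) /= hb; apply/val_inj.
    by rewrite (teta _ t1) (teta _ t2) h1 h2 hb.
  apply: subset_leq_card; apply/subsetP => t' /imsetP[t]; rewrite inE.
  move=> /andP[/eqP <- Hw] ->; rewrite inE.
  by case: t Hw => [[|x [|y s]] //= _] /andP[-> ->].
have H2 : (#|[set t' : m.+1.-tuple T | e v (thead t') && walkb e t']|
   <= \sum_(u in nbhd e v) #|[set t : m.+1.-tuple T | (thead t == u) && walkb e t]|)%N.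
  apply: leq_trans (card_bigcup_le _ _); apply: subset_leq_card.
  apply/subsetP => t; rewrite inE => /andP[He Hw]; apply/bigcupP.
  by exists (thead t); rewrite !inE ?He ?eqxx.
apply: le_trans (_ : (\sum_(u in nbhd e v) #|[set t : m.+1.-tuple T | (thead t == u) && walkb e t]|)%:R <= _).
  by rewrite ler_nat (leq_trans H1 H2).
rewrite natr_sum.
apply: le_trans (_ : \sum_(u in nbhd e v) sn ^+ m <= _); first by apply: ler_sum => u _; exact: IH.
rewrite sumr_const -mulr_natl exprS ler_wpM2r //; first by rewrite exprn_ge0 // sqrtr_ge0.
Qed.

Lemma walk_all m : (0 < m)%N ->
  (#|[set t : m.-tuple T | walkb e t]|%:R : R)
    <= #|T|%:R * Num.sqrt (#|T|%:R) ^+ m.-1.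
Proof.
case: m => // m _ /=.
apply: le_trans (_ : (\sum_(v : T) #|[set t : m.+1.-tuple T | (thead t == v) && walkb e t]|)%:R <= _).
  rewrite ler_nat; apply: leq_trans (card_bigcup_le _ _); apply: subset_leq_card.
  apply/subsetP => t; rewrite inE => Hw; apply/bigcupP.
  by exists (thead t); rewrite // !inE eqxx.
rewrite natr_sum.
apply: le_trans (_ : \sum_(v : T) Num.sqrt (#|T|%:R) ^+ m <= _).
  by apply: ler_sum => v _; exact: walk_head.
by rewrite sumr_const mulr_natl cardT.
Qed.

Hypothesis sg : simple_graph e.

Lemma through_le (k : nat) (x0 : T) (p : seq T) : (3 <= k)%N ->
  (#|cycles_through e k p| <= #|nbhd e (nth x0 p (k-3))| * #|nbhd e (nth x0 p 0)|)%N.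
Proof.
move=> k3.
set A := cycles_through e k p.
pose wit C := [pick s : k.-tuple T | [&& cycle_seq e k s, cedges s == C & take (k - 2) s == p]].
pose g C := if wit C is Some s then (nth x0 s (k-2), nth x0 s (k-1)) else (x0,x0).
have gP : forall C, C \in A -> exists s : k.-tuple T,
   [/\ cycle_seq e k s, cedges s = C, take (k-2) s = p & g C = (nth x0 s (k-2), nth x0 s (k-1))].
  move=> C; rewrite inE => /existsP[s0 Hs0]; rewrite /g /wit.
  case: pickP => [s /and3P[h1 /eqP h2 /eqP h3] | /(_ s0)]; first by exists s.
  by rewrite Hs0.
rewrite -cardsX -(card_in_imset (f := g)); last first.
  move=> C1 C2 H1 H2.
  have [s1 [_ hC1 hp1 ->]] := gP C1 H1.
  have [s2 [_ hC2 hp2 ->]] := gP C2 H2.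
  case=> ea eb; rewrite -hC1 -hC2; congr cedges.
  apply: (@eq_from_nth _ x0); first by rewrite !size_tuple.
  move=> i; rewrite size_tuple => ik.
  case: (ltnP i (k-2)) => hi.
    by rewrite -(nth_take _ hi) hp1 -hp2 nth_take.
  have : (i = k-2 \/ i = k-1)%N by lia.
  by case=> ->.
apply: subset_leq_card; apply/subsetP => _ /imsetP[C HC ->].
have [s [hc hC hp ->]] := gP C HC.
case: sg => sym _.
move: hc => /and3P[/eqP sz _ hcy].
move: hcy; rewrite (cycle_path x0) => /(pathP x0) hpth.
rewrite !inE /=; apply/andP; split.
  have := hpth (k-2)%N; rewrite sz (_ : k - 2 = (k-3).+1)%N /=; last by lia.
  rewrite -hp nth_take; last by lia.
  by apply; lia.
have := hpth 0; rewrite sz -hp nth_take; last by lia.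
rewrite /= -nth_last sz (_ : k.-1 = k - 1)%N; last by lia.
by rewrite sym; apply; lia.
Qed.

Lemma through_simple (k : nat) (p : seq T) :
  (0 < #|cycles_through e k p|)%N -> simple_path e p.
Proof.
case/card_gt0P => C; rewrite inE => /existsP[s /and3P[/and3P[_ hu hc] _ /eqP <-]].
rewrite /simple_path take_uniq //=.
case: s hu hc => [[|x q] /=] // _ _ hc.
case: (k - 2)%N => //= j; apply: take_path.
by move: hc; rewrite rcons_path => /andP[].
Qed.

End W.
Lemma sum_ind (R : realType) (X : finType) (A : {set X}) :
  \sum_(p : X) ((p \in A)%:R : R) = #|A|%:R.
Proof.
rewrite -natr_sum -sum1_card [in RHS]big_mkcond /=; congr (_%:R).
Qed.

Unset Implicit Arguments.
Set Strict Implicit.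
Theorem lemma5p3 (R : realType) (T : finType) (e : rel T) (k : nat) (gamma : R) :
  simple_graph e ->
  (4 <= k)%N ->
  0 <= gamma -> gamma < 2^-1 ->
  (forall v : T, (#|nbhd e v|%:R : R) <= Num.sqrt (#|T|%:R)) ->
  (#|T|%:R `^ (k%:R / 2 + gamma) <= (#|kcycles e k|%:R : R)) ->
  2^-1 * #|T|%:R `^ (k%:R / 2 - 1 + gamma)
    <= (#|[set p : (k - 2).-tuple T | gamma_dense e gamma k p]|%:R : R).
Proof.
move=> sg k4 g0 g12 deg Hcyc.
have k4R : (4 : R) <= k%:R by rewrite (ler_nat R 4 k).
set n := #|T|.
case: (posnP n) => [n0 | npos].
  rewrite n0 powR0 ?mulr0 //; apply: lt0r_neq0; lra.
have [x0 _] : exists x : T, true by case/card_gt0P: npos => x; exists x.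
set D := [set p : (k - 2).-tuple T | gamma_dense e gamma k p].
set S := [set p : (k - 2).-tuple T | simple_path e p].
set tau := (n%:R `^ (2^-1 + gamma)) / 2.
set sn := Num.sqrt (n%:R : R).
have nR : (0 : R) < n%:R by rewrite ltr0n.
have tau0 : 0 <= tau by rewrite divr_ge0 // powR_ge0.
have step1 : (#|kcycles e k| <= \sum_(p : (k-2).-tuple T) #|cycles_through e k p|)%N.
  apply: leq_trans (card_bigcup_le _ _); apply: subset_leq_card.
  apply/subsetP => C; rewrite inE => /existsP[s /andP[hc /eqP hC]].
  apply/bigcupP.
  have sz : size (take (k-2) s) == (k-2)%N by rewrite size_takel // size_tuple leq_subr.
  exists (Tuple sz) => //; rewrite inE; apply/existsP; exists s.
  by rewrite hc hC !eqxx.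
have step2 : forall p : (k-2).-tuple T, (#|cycles_through e k p|%:R : R)
     <= n%:R * (p \in D)%:R + tau * (p \in S)%:R.
  move=> p; case: (boolP (p \in D)) => hD.
    have hle : (#|cycles_through e k p|%:R : R) <= n%:R.
      apply: le_trans (_ : (#|nbhd e (nth x0 p (k-3))| * #|nbhd e (nth x0 p 0)|)%:R <= _).
        by rewrite ler_nat; apply: through_le => //; lia.
      rewrite natrM -[n%:R](@sqr_sqrtr _ n%:R) ?ler0n // expr2.
      by apply: ler_pM => //.
    by rewrite mulr1; apply: le_trans hle _; rewrite lerDl mulr_ge0.
  rewrite mulr0 add0r; case: (boolP (p \in S)) => hS.
    move: hD; rewrite !inE in hS *; rewrite /gamma_dense hS /= -ltNge => hlt.
    by rewrite mulr1; apply: ltW.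
  rewrite mulr0 lern0 -leqn0 leqNgt; apply/negP => hz.
  by move: hS; rewrite inE (through_simple hz).
have step3 : (#|kcycles e k|%:R : R) <= n%:R * #|D|%:R + tau * #|S|%:R.
  apply: le_trans (_ : (\sum_(p : (k-2).-tuple T) #|cycles_through e k p|)%:R <= _).
    by rewrite ler_nat.
  rewrite natr_sum; apply: le_trans (ler_sum _ (fun p _ => step2 p)) _.
  by rewrite big_split /= -!mulr_sumr !sum_ind.
have step4 : (#|S|%:R : R) <= n%:R * sn ^+ (k-3).
  apply: le_trans (_ : (#|[set t : (k-2).-tuple T | walkb e t]|%:R : R) <= _).
    rewrite ler_nat; apply: subset_leq_card; apply/subsetP => t; rewrite !inE.
    by case/andP.
  have := walk_all deg (m := (k-2)%N); rewrite (_ : ((k-2).-1 = k-3)%N); last by lia.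
  by apply; lia.
have nn0 : (n%:R : R) != 0 by rewrite lt0r_neq0.
have sqE : sn = n%:R `^ 2^-1 by rewrite powR12_sqrt.
have snE : sn ^+ (k-3) = n%:R `^ (2^-1 * (k-3)%:R).
  by rewrite sqE -powR_mulrn ?powR_ge0 // -powRrM.
have e1 : n%:R `^ (2^-1 + gamma) * (n%:R `^ 1 * n%:R `^ (2^-1 * (k-3)%:R))
    = n%:R `^ (k%:R/2 - 1 + gamma) * n%:R `^ 1 :> R.
  rewrite -!powRD ?nn0 ?implybT //; congr (_ `^ _); rewrite natrB; last by lia.
  lra.
have e2 : n%:R `^ (k%:R/2 + gamma) = n%:R `^ (k%:R/2 - 1 + gamma) * n%:R `^ 1 :> R.
  by rewrite -powRD ?nn0 ?implybT //; congr (_ `^ _); lra.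
rewrite powRr1 ?ler0n // in e1 e2.
set X := n%:R `^ (k%:R/2 - 1 + gamma) in e1 e2 *.
have key : tau * (n%:R * sn ^+ (k-3)) = X * n%:R / 2.
  by rewrite /tau snE -e1; ring.
have h5 : tau * #|S|%:R <= X * n%:R / 2 by rewrite -key ler_wpM2l.
have X0 : 0 <= X by rewrite powR_ge0.
rewrite e2 in Hcyc.
have d0 : (0:R) <= #|D|%:R by [].
nra.
Qed.
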